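(* Let $b\ge1$ and let $f\in\mathcal{M}^b$ be not identically $0$, with set-array representation $(A_1,A_2,\ldots,A_b)$ (so $A_1\neq\emptyset$). Let $f^*\in\mathcal{M}^b$ be the multiset with set-array representation $(A_1,\emptyset,\ldots,\emptyset)$. Then $d(f^* )\ge d(f)$, and the inequality is strict if $A_2\neq\emptyset$.
   Context: $\mathcal{M}^b$ is the set of finitely supported functions $f:\mathbb{N}\to\{0,\ldots,b\}$, $\mathbb{N}=\{0,1,\ldots\}$. The set-array representation of $f$ is $(A_1,\ldots,A_b)$ with $A_i=\{a:f(a)\ge i\}$. Multiset addition is coordinatewise on set arrays, $(A_i)_i+(B_i)_i=(A_i+B_i)_i$, where $S+T=\{s+t:s\in S,t\in T\}$ and $S+\emptyset=\emptyset$. $g\in\mathcal{M}^b$ is a divisor of $f$ if $f=g+h$ for some $h\in\mathcal{M}^b$; $d(f)$ is the number of divisors of $f$. *)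

(* Defs.v *)
From mathcomp Require Import all_boot.
Set Implicit Arguments. Unset Strict Implicit. Unset Printing Implicit Defensive.

Definition inMb (b : nat) (f : nat -> nat) : Prop :=
  (forall a, f a <= b) /\ exists N, forall a, N <= a -> f a = 0.

Definition setA (f : nat -> nat) (i : nat) : nat -> Prop := fun a => i <= f a.

Definition sumset (S T : nat -> Prop) : nat -> Prop :=
  fun c => exists s t, S s /\ T t /\ s + t = c.

(* h = f + g in M^b: the set array of h is the coordinatewise sumset
   of the set arrays of f and g. *)
Definition msum_is (b : nat) (f g h : nat -> nat) : Prop :=
  inMb b h /\
  forall i, 1 <= i <= b -> forall c, setA h i c <-> sumset (setA f i) (setA g i) c.

Definition is_divisor (b : nat) (f g : nat -> nat) : Prop :=
  inMb b g /\ exists h, inMb b h /\ msum_is b g h f.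

Definition has_card (P : (nat -> nat) -> Prop) (n : nat) : Prop :=
  exists e : 'I_n -> (nat -> nat),
    injective e /\ forall g, P g <-> exists i, e i = g.

Definition fstar (f : nat -> nat) : nat -> nat := fun a => if 0 < f a then 1 else 0.

(* Main.v *)
Require Import Defs.
From mathcomp Require Import all_boot.
From mathcomp Require Import zify.
From Stdlib Require Import ClassicalEpsilon FunctionalExtensionality.
Set Implicit Arguments. Unset Strict Implicit.

Definition pb {T : Type} (P : T -> Prop) (t : T) : bool :=
  if excluded_middle_informative (P t) then true else false.

Lemma pbP (T : Type) (P : T -> Prop) t : pb P t = true <-> P t.
Proof. rewrite /pb; case: excluded_middle_informative => //. Qed.

Lemma card_gen (T : finType) (emb : T -> (nat -> nat)) (P : (nat -> nat) -> Prop) :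
  injective emb -> (forall u, P u -> exists t, emb t = u) ->
  has_card P #|[pred t | pb (fun t => P (emb t)) t]|.
Proof.
move=> inj sur.
exists (fun i => emb (enum_val i)); split.
  by move=> i j /inj /enum_val_inj.
move=> g; split.
  move=> Pg; case: (sur g Pg) => t et.
  have Ht : t \in [pred t | pb (fun t => P (emb t)) t].
    by rewrite inE; apply/pbP; rewrite et.
  exists (enum_rank_in Ht t); by rewrite enum_rankK_in.
case=> i <-. have := enum_valP i. by rewrite inE => /pbP.
Qed.

Definition emb (N b : nat) (t : {ffun 'I_N -> 'I_b.+1}) : nat -> nat :=
  fun a => if @insub nat (fun x => x < N) 'I_N a is Some i then nat_of_ord (t i) else 0.

Lemma emb_inj N b : injective (@emb N b).
Proof.
move=> t1 t2 E; apply/ffunP => i; apply: val_inj.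
have := congr1 (fun g => g (nat_of_ord i)) E.
by rewrite /emb /= valK.
Qed.

Lemma emb_sur N b (g : nat -> nat) : (forall a, g a <= b) ->
  (forall a, N <= a -> g a = 0) -> exists t, @emb N b t = g.
Proof.
move=> gb gN; exists [ffun i : 'I_N => (inord (g i) : 'I_b.+1)].
apply: functional_extensionality => a; rewrite /emb.
case: insubP => [i _ <-|]; first by rewrite ffunE inordK // ltnS.
by rewrite -leqNgt => /gN ->.
Qed.

Lemma fstar_le1 f a : fstar f a <= 1.
Proof. by rewrite /fstar; case: ifP. Qed.

Lemma setA_fstar1 f c : setA (fstar f) 1 c <-> setA f 1 c.
Proof. by rewrite /setA /fstar; case: ifP => //= /negbT; rewrite lt0n negbK => /eqP ->. Qed.

Lemma inMb_fstar b f : 1 <= b -> inMb b f -> inMb b (fstar f).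
Proof.
move=> b1 [_ [N HN]]; split; first by move=> a; exact: leq_trans (fstar_le1 f a) b1.
by exists N => a /HN; rewrite /fstar => ->.
Qed.

Lemma div_sub b f g : 1 <= b -> inMb b f -> is_divisor b f g -> is_divisor b (fstar f) g.
Proof.
move=> b1 fM [gM [h [hM [_ S]]]]; split => //.
exists (fstar h); split; first exact: inMb_fstar.
split; first exact: inMb_fstar.
move=> i /andP [i1 ib] c.
case: (ltngtP i 1) => [|i2|->].
- by rewrite ltnNge i1.
- split.
    by rewrite /setA => H; have := leq_trans H (fstar_le1 f c); rewrite leqNgt i2.
  move=> [s [t [_ [H _]]]]; have := leq_trans H (fstar_le1 h t); by rewrite leqNgt i2.
- rewrite setA_fstar1 (S 1 (introT andP (conj (leqnn 1) b1)) c).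
  split; move=> [s [t [Hs [Ht E]]]]; exists s, t; split=> //; split=> //;
    by apply/setA_fstar1.
Qed.

Lemma div_bound b f g N : (exists a, f a <> 0) -> (forall a, N <= a -> f a = 0) ->
  1 <= b -> is_divisor b (fstar f) g -> forall a, N <= a -> g a = 0.
Proof.
move=> [a0 fa0] HN b1 [gM [h [hM [_ S]]]] a aN.
case: (posnP (g a)) => // ga.
have S1 := S 1 (introT andP (conj (leqnn 1) b1)).
have : setA (fstar f) 1 a0 by apply/setA_fstar1; rewrite /setA lt0n; apply/eqP.
move/S1 => [s [t [_ [Ht _]]]].
have : sumset (setA g 1) (setA h 1) (a + t) by exists a, t.
move/S1/setA_fstar1; rewrite /setA HN //; exact: leq_trans aN (leq_addr _ _).
Qed.

Definition delta0 (a : nat) : nat := if a == 0 then 1 else 0.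

Lemma fstar_div b f : 1 <= b -> inMb b f -> is_divisor b (fstar f) (fstar f).
Proof.
move=> b1 fM; have fsM := inMb_fstar b1 fM.
split => //; exists delta0; split.
  split; first by move=> a; rewrite /delta0; case: ifP.
  by exists 1 => a; rewrite /delta0; case: a.
split => // i /andP [i1 ib] c; split.
  move=> H; exists c, 0; split => //; split; last by rewrite addn0.
  by rewrite /setA /delta0 /=; exact: leq_trans H (fstar_le1 f c).
move=> [s [t [Hs [Ht <-]]]].
move: Ht; rewrite /setA /delta0; case: (t =P 0) => [->|_].
  by rewrite addn0.
by rewrite leqNgt i1.
Qed.

Lemma fstar_ndiv b f : inMb b f -> (exists a, setA f 2 a) -> ~ is_divisor b f (fstar f).
Proof.
move=> [fb _] [a Ha] [_ [h [_ [_ S]]]].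
have b2 : 1 <= 2 <= b by rewrite /=; exact: leq_trans Ha (fb a).
have [s [t [Hs _]]] := proj1 (S 2 b2 a) Ha.
by have := leq_trans Hs (fstar_le1 f s).
Qed.

Theorem mainTheorem18 (b : nat) (f : nat -> nat) :
  1 <= b -> inMb b f -> (exists a, f a <> 0) ->
  exists n m : nat,
    has_card (is_divisor b f) n /\
    has_card (is_divisor b (fstar f)) m /\
    n <= m /\
    ((exists a, setA f 2 a) -> n < m).
Proof.
move=> b1 fM fnz.
have [fb [N HN]] := fM.
have sur2 : forall g, is_divisor b (fstar f) g -> exists t, @emb N b t = g.
  move=> g Hg; apply: emb_sur.
    by case: Hg => [[gb _] _].
  exact: div_bound fnz HN b1 Hg.
have sur1 : forall g, is_divisor b f g -> exists t, @emb N b t = g.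
  by move=> g /(div_sub b1 fM) /sur2.
have sub : [pred t : {ffun 'I_N -> 'I_b.+1} | pb (fun t => is_divisor b f (emb t)) t]
    \subset [pred t : {ffun 'I_N -> 'I_b.+1} | pb (fun t => is_divisor b (fstar f) (emb t)) t].
  apply/subsetP => t; rewrite !inE => /pbP H; apply/pbP; exact: div_sub.
eexists; eexists; split; first exact: (card_gen (@emb_inj N b) sur1).
split; first exact: (card_gen (@emb_inj N b) sur2).
split; first exact: subset_leq_card.
move=> H2; apply: proper_card; apply/properP; split => //.
have [t Et] := sur2 _ (fstar_div b1 fM).
exists t; rewrite !inE.
  by apply/pbP; rewrite Et; exact: fstar_div.
apply/negP => /pbP; rewrite Et; exact: fstar_ndiv.
Qed.
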